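(* Let $k$ be a field, $S=k[[x_1,\dots,x_d]]$, $n>1$ an integer, and $R=S^{(n)}$ the $n$-th Veronese subring of $S$. Let $L=x_1S\cap R$, which generates the divisor class group $\operatorname{Cl}(R)\cong\mathbb Z/n\mathbb Z$, and for $1\leq i\leq n-1$ let $L^{(i)}$ be the $i$-th symbolic power of $L$ (the rank one reflexive module representing $i[L]$ in $\operatorname{Cl}(R)$). Then the minimal number of generators of $L^{(i)}$ is $$\mu(L^{(i)})=\binom{n-i+d-1}{d-1}=\frac{(n+d-i-1)!}{(d-1)!\,(n-i)!}\quad\text{for } i=1,\dots,n-1,$$ i.e., the number of monomials of degree $n-i$ in $d$ variables.
   Context: The $n$-th Veronese subring $S^{(n)}$ is the subring of $S$ consisting of power series all of whose monomials have degree divisible by $n$ (the subring generated by monomials of degree $n$); it is a complete Cohen-Macaulay normal local domain with isolated singularity. For a normal domain $R$, $\operatorname{Cl}(R)$ is the group of isomorphism classes of rank one reflexive $R$-modules, with $[\operatorname{Hom}_R(I,J)]=[J]-[I]$. *)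

(* Defs.v *)
(* Formal power series in d variables over a field k,
   represented as coefficient functions on exponent vectors. *)
From Stdlib Require List.
From mathcomp Require Import all_boot all_order all_algebra.
Set Implicit Arguments. Unset Strict Implicit. Unset Printing Implicit Defensive.
Import GRing.Theory.
Local Open Scope ring_scope.

Section PS.
Variables (k : fieldType) (d : nat).

Definition mon := {ffun 'I_d -> nat}.
Definition deg (a : mon) : nat := (\sum_(j < d) a j)%N.

Definition ps := mon -> k.

Definition pszero : ps := fun _ => 0.
Definition psadd (f g : ps) : ps := fun a => f a + g a.
(* Cauchy product: (fg)_a = sum_{b <= a} f_b g_{a-b} *)
Definition psmul (f g : ps) : ps := fun a =>
  \sum_(b : {ffun 'I_d -> 'I_(deg a).+1} | [forall j, (b j <= a j)%N])
     f [ffun j => nat_of_ord (b j)] * g [ffun j => (a j - b j)%N].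
Definition psone : ps := fun a => if deg a == 0%N then 1 else 0.
(* the variable x_1 (index 0) *)
Definition x1 : ps := fun a => if a == [ffun j : 'I_d => (nat_of_ord j == 0%N) : nat]
                               then 1 else 0.

Definition veronese (n : nat) (f : ps) : Prop := forall a, f a != 0 -> (n %| deg a)%N.

Definition pssum (s : seq ps) : ps := foldr psadd pszero s.

Definition span (R G : ps -> Prop) (f : ps) : Prop :=
  exists s : seq (ps * ps), (forall p, List.In p s -> R p.1 /\ G p.2) /\
    f = pssum [seq psmul p.1 p.2 | p <- s].

Fixpoint prodset (I : ps -> Prop) (i : nat) : ps -> Prop :=
  match i with
  | 0 => fun f => f = psone
  | i'.+1 => fun f => exists g h, prodset I i' g /\ I h /\ f = psmul g h
  end.

Definition idealpow (R I : ps -> Prop) (i : nat) : ps -> Prop := span R (prodset I i).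

(* symbolic power P^(i) = P^i R_P \cap R of a prime ideal P of R *)
Definition sympow (R P : ps -> Prop) (i : nat) (f : ps) : Prop :=
  R f /\ exists s, R s /\ ~ P s /\ idealpow R P i (psmul s f).

Definition generated_by (R M : ps -> Prop) (s : seq ps) : Prop :=
  forall f, M f <-> span R (fun g => List.In g s) f.
Definition min_num_gens (R M : ps -> Prop) (m : nat) : Prop :=
  (exists s, size s = m /\ (forall g, List.In g s -> M g) /\ generated_by R M s) /\
  (forall s, (forall g, List.In g s -> M g) -> generated_by R M s -> (m <= size s)%N).

End PS.

(* Main.v *)
Require Import Defs.
From mathcomp Require Import all_boot all_order all_algebra.
From Stdlib Require Import Classical FunctionalExtensionality Lia.
From mathcomp Require Import zify.
Set Implicit Arguments. Unset Strict Implicit. Unset Printing Implicit Defensive.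
Import GRing.Theory.
Local Open Scope ring_scope.

Lemma In_memP (T : eqType) (x : T) s : reflect (List.In x s) (x \in s).
Proof.
elim: s => [|y s IH] /=; first by constructor.
rewrite in_cons; apply: (iffP orP) => [[/eqP->|/IH]|[->|/IH]]; auto.
Qed.

Definition incrh (s : seq nat) : seq nat :=
  if s is x :: s' then x.+1 :: s' else [::].

Fixpoint comps (d : nat) (m : nat) : seq (seq nat) :=
  match d with
  | 0 => if m == 0%N then [:: [::]] else [::]
  | d'.+1 => let fix go m := match m with
                              | 0 => [:: nseq d'.+1 0%N]
                              | m'.+1 => map (cons 0%N) (comps d' m'.+1) ++ map incrh (go m')
                              end in go m
  end.

Lemma compsS d m : comps d.+1 m.+1 = map (cons 0%N) (comps d m.+1) ++ map incrh (comps d.+1 m).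
Proof. by []. Qed.

Lemma comps_d0 d : comps d.+1 0 = [:: nseq d.+1 0%N].
Proof. by []. Qed.

Lemma sumn_eq0 s : (sumn s == 0%N) = (s == nseq (size s) 0%N).
Proof. by elim: s => [|x s IH] //=; rewrite addn_eq0 IH eqseq_cons. Qed.

Lemma mem_comps d m s : (s \in comps d m) = (size s == d) && (sumn s == m).
Proof.
elim: d m s => [|d IHd] m s.
  by case: m => [|m] /=; case: s => [|x s] //=; rewrite ?inE //.
elim: m s => [|m IHm] s.
  rewrite comps_d0 inE; apply/eqP/andP => [->|[/eqP hs]]; first by rewrite size_nseq sumn_nseq ?muln0 ?mul0n.
  by rewrite sumn_eq0 hs => /eqP.
rewrite compsS mem_cat; case: s => [|x s].
  rewrite /=; apply/negbTE; rewrite negb_or; apply/andP; split.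
    by apply/mapP => -[t _].
  apply/mapP => -[t]; rewrite IHm; case: t => [|y t] //=.
case: x => [|x].
  rewrite mem_map; last by move=> a b [].
  rewrite IHd /= add0n eqSS.
  have -> : (0 :: s \in [seq incrh i | i <- comps d.+1 m]) = false.
    by apply/negbTE; apply/mapP => -[[|y t]] //.
  by rewrite orbF.
have -> : (x.+1 :: s \in [seq 0%N :: x | x <- comps d m.+1]) = false.
  by apply/negbTE; apply/mapP => -[t].
rewrite /=; apply/mapP/idP.
  case=> -[|y t]; rewrite IHm //= => /andP [h1 h2] [-> ->]; by rewrite h1 addSn eqSS.
move=> /andP [h1]; rewrite addSn eqSS => h2; exists (x :: s) => //.
by rewrite IHm /= h1.
Qed.

Lemma uniq_comps d m : uniq (comps d m).
Proof.
elim: d m => [|d IHd] m; first by case: m.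
elim: m => [|m IHm] //.
rewrite compsS cat_uniq; apply/and3P; split.
- by rewrite map_inj_uniq // => a b [].
- apply/hasPn => t /mapP [u hu ->]; apply/mapP => -[v _].
  move: hu; rewrite mem_comps; case: u => [|y u] //=.
- rewrite map_inj_in_uniq // => a b; rewrite !mem_comps; case: a => [|x a]; case: b => [|y b] //=.
  by move=> _ _ [-> ->].
Qed.

Lemma size_comps d m : size (comps d m) = 'C(m + d - 1, m).
Proof.
elim: d m => [|d IHd] m.
  case: m => [|m] //=; by rewrite addn0 subn1 /= bin_small.
elim: m => [|m IHm]; first by rewrite /= bin0.
rewrite compsS size_cat !size_map IHd IHm.
have -> : (m.+1 + d - 1 = m + d)%N by lia.
have -> : (m + d.+1 - 1 = m + d)%N by lia.
have -> : (m.+1 + d.+1 - 1 = (m + d).+1)%N by lia.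
by rewrite binS addnC.
Qed.

Section Mon.
Variable d : nat.
Implicit Types a b c : mon d.

Definition madd a b : mon d := [ffun j => (a j + b j)%N].
Definition msub a b : mon d := [ffun j => (a j - b j)%N].
Definition mle a b : bool := [forall j, (a j <= b j)%N].
Definition mzero : mon d := [ffun j => 0%N].

Lemma mleP a b : reflect (forall j, a j <= b j)%N (mle a b).
Proof. exact: forallP. Qed.

Lemma deg_madd a b : deg (madd a b) = (deg a + deg b)%N.
Proof. by rewrite /deg -big_split /=; apply: eq_bigr => j _; rewrite ffunE. Qed.

Lemma mle_deg a b : mle a b -> (deg a <= deg b)%N.
Proof. by move/mleP=> h; rewrite /deg; apply: leq_sum => j _. Qed.

Lemma msubK a b : mle b a -> madd (msub a b) b = a.
Proof. by move/mleP=> h; apply/ffunP=> j; rewrite !ffunE subnK. Qed.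

Lemma maddK a b : msub (madd a b) b = a.
Proof. by apply/ffunP=> j; rewrite !ffunE addnK. Qed.

Lemma maddC a b : madd a b = madd b a.
Proof. by apply/ffunP=> j; rewrite !ffunE addnC. Qed.

Lemma mle_addl a b : mle b (madd a b).
Proof. by apply/mleP=> j; rewrite ffunE leq_addl. Qed.

Lemma deg_msub a b : mle b a -> deg (msub a b) = (deg a - deg b)%N.
Proof. by move=> h; rewrite -{2}(msubK h) deg_madd addnK. Qed.

Lemma deg_eq0 a : (deg a == 0%N) = (a == mzero).
Proof.
apply/idP/eqP.
  move=> h; apply/ffunP=> j; rewrite ffunE; apply/eqP; rewrite -leqn0.
  by rewrite -(eqP h) /deg (bigD1 j) //= leq_addr.
by move->; rewrite /deg big1 // => j _; rewrite ffunE.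
Qed.

Lemma coord_le_deg a j : (a j <= deg a)%N.
Proof. by rewrite /deg (bigD1 j) //= leq_addr. Qed.


Definition tomon (s : seq nat) : mon d := [ffun j : 'I_d => nth 0%N s j].
Definition monlist m : seq (mon d) := [seq tomon s | s <- comps d m].

Lemma sum_nth s : (\sum_(j < size s) nth 0%N s j)%N = sumn s.
Proof. by rewrite sumnE (big_nth 0%N) big_mkord. Qed.

Lemma mem_monlist m c : (c \in monlist m) = (deg c == m).
Proof.
apply/mapP/eqP => [[s]|hc].
  rewrite mem_comps => /andP [/eqP hs /eqP hm] ->.
  rewrite /deg -hm -sum_nth hs; by apply: eq_bigr => j _; rewrite ffunE.
exists [seq c j | j <- enum 'I_d].
  rewrite mem_comps size_map size_enum_ord eqxx /= sumnE big_map.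
  by rewrite big_enum /= -hc.
apply/ffunP=> j; rewrite ffunE (nth_map j) ?size_enum_ord // nth_ord_enum //.
Qed.

Lemma uniq_monlist m : uniq (monlist m).
Proof.
rewrite map_inj_in_uniq ?uniq_comps // => s t; rewrite !mem_comps.
move=> /andP [/eqP hs _] /andP [/eqP ht _] e.
apply: (@eq_from_nth _ 0%N); first by rewrite hs ht.
move=> j hj; rewrite hs in hj.
by move/ffunP: e => /(_ (Ordinal hj)); rewrite !ffunE.
Qed.

Lemma size_monlist m : size (monlist m) = 'C(m + d - 1, m).
Proof. by rewrite size_map size_comps. Qed.
End Mon.
Section PSL.
Variables (k : fieldType) (d : nat).
Local Notation ps := (ps k d).
Local Notation mon := (mon d).
Implicit Types f g h : ps.
Local Notation pszero := (@pszero k d).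
Local Notation psone := (@psone k d).
Local Notation x1 := (@x1 k d).
Implicit Types a b c : mon.

Definition tom c (b : {ffun 'I_d -> 'I_(deg c).+1}) : mon := [ffun j => nat_of_ord (b j)].

Lemma psmulE f g c : psmul f g c =
  \sum_(b : {ffun 'I_d -> 'I_(deg c).+1} | [forall j, (b j <= c j)%N])
     f (tom b) * g (msub c (tom b)).
Proof.
apply: eq_bigr => b _; congr (_ * g _); apply/ffunP=> j; rewrite !ffunE //.
Qed.

Lemma psmul_single f g c b0 : mle b0 c ->
  (forall b, mle b c -> b != b0 -> f b * g (msub c b) = 0) ->
  psmul f g c = f b0 * g (msub c b0).
Proof.
move=> hb0 h; rewrite psmulE.
have hlt j : (b0 j < (deg c).+1)%N.
  by rewrite ltnS (leq_trans _ (coord_le_deg c j)) //; move/mleP: hb0.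
pose bb : {ffun 'I_d -> 'I_(deg c).+1} := [ffun j => Ordinal (hlt j)].
have tbb : tom bb = b0 by apply/ffunP=> j; rewrite !ffunE.
rewrite (bigD1 bb) /=; last by apply/forallP=> j; rewrite ffunE /=; move/mleP: hb0.
rewrite big1 ?addr0 ?tbb // => b /andP [hb hne]; apply: h.
  by apply/mleP=> j; rewrite ffunE; move/forallP: hb.
apply: contra hne => /eqP e; apply/eqP/ffunP=> j; apply: val_inj.
by rewrite ffunE /=; move/ffunP: e => /(_ j); rewrite !ffunE.
Qed.

Lemma psmul_zero f g c :
  (forall b, mle b c -> f b * g (msub c b) = 0) -> psmul f g c = 0.
Proof.
move=> h; rewrite psmulE big1 // => b hb; apply: h.
by apply/mleP=> j; rewrite ffunE; move/forallP: hb.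
Qed.

Lemma psmul_nz f g c : psmul f g c != 0 ->
  exists b, [/\ mle b c, f b != 0 & g (msub c b) != 0].
Proof.
move=> h; apply: NNPP => hn; move/eqP: h; apply; apply: psmul_zero => b hb.
apply/eqP; apply: contraT => hne; case: hn; exists b.
by move: hne; rewrite mulf_eq0 negb_or => /andP [] *; split.
Qed.

Definition mono a : ps := fun c => if c == a then 1 else 0.

Lemma psmul_monor f a c :
  psmul f (mono a) c = if mle a c then f (msub c a) else 0.
Proof.
case: ifP => ha.
  rewrite (psmul_single (b0 := msub c a)).
    suff -> : msub c (msub c a) = a by rewrite /mono eqxx mulr1.
    by apply/ffunP=> j; rewrite !ffunE subKn //; move/mleP: ha.
    by apply/mleP=> j; rewrite ffunE leq_subr.
  move=> b hb hne; rewrite /mono; case: eqP; rewrite ?mulr0 // => e.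
  case/eqP: hne; rewrite -e; apply/ffunP=> j; rewrite !ffunE subKn //.
  by move/mleP: hb.
apply: psmul_zero => b hb; rewrite /mono; case: eqP; rewrite ?mulr0 // => e.
move: ha; rewrite -e; have -> // : mle (msub c b) c.
by apply/mleP=> j; rewrite ffunE leq_subr.
Qed.

Lemma psmul_monol f a c :
  psmul (mono a) f c = if mle a c then f (msub c a) else 0.
Proof.
case: ifP => ha.
  rewrite (psmul_single (b0 := a)) //; first by rewrite /mono eqxx mul1r.
  by move=> b hb hne; rewrite /mono (negbTE hne) mul0r.
apply: psmul_zero => b hb; rewrite /mono; case: eqP; rewrite ?mul0r // => e.
by move: ha; rewrite -e hb.
Qed.

Lemma mono_mul a b : psmul (mono a) (mono b) = mono (madd a b).
Proof.
apply: functional_extensionality => c; rewrite psmul_monol.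
case: ifP => ha; rewrite /mono.
  suff -> : (msub c a == b) = (c == madd a b) by [].
  apply/eqP/eqP => [<-|->]; first by rewrite maddC msubK.
  by rewrite maddC maddK.
case: eqP => // e; move: ha; rewrite e maddC; move/negP; case; exact: mle_addl.
Qed.
Definition supp (Q : pred mon) f := forall c, f c != 0 -> Q c.

Lemma supp_add Q f g : supp Q f -> supp Q g -> supp Q (psadd f g).
Proof.
move=> hf hg c; rewrite /psadd => h; case: (eqVneq (f c) 0) => e.
  by apply: hg; move: h; rewrite e add0r.
exact: hf.
Qed.

Lemma supp_zero Q : supp Q pszero.
Proof. by move=> c; rewrite /pszero eqxx. Qed.

Lemma supp_mul (Qf Qg Qh : pred mon) f g :
  (forall b c, mle b c -> Qf b -> Qg (msub c b) -> Qh c) ->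
  supp Qf f -> supp Qg g -> supp Qh (psmul f g).
Proof.
move=> H hf hg c /psmul_nz [b [hb h1 h2]]; apply: (H b) => //; [exact: hf|exact: hg].
Qed.

Lemma pssum_coef (s : seq (ps * ps)) c :
  pssum [seq psmul p.1 p.2 | p <- s] c = \sum_(p <- s) psmul p.1 p.2 c.
Proof. by elim: s => [|p s IH]; rewrite ?big_nil ?big_cons //= /psadd IH. Qed.

Lemma span_supp (R G : ps -> Prop) (Q : pred mon) f :
  (forall r g, R r -> G g -> supp Q (psmul r g)) -> Defs.span R G f -> supp Q f.
Proof.
move=> H [s [hs ->]]; elim: s hs => [|p s IH] hs /=; first exact: supp_zero.
apply: supp_add; last by apply: IH => q hq; apply: hs; right.
by case: (hs p (or_introl erefl)) => *; apply: H.
Qed.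

Lemma psone_mono : psone = mono (@mzero d).
Proof.
by apply: functional_extensionality => c; rewrite /psone /mono deg_eq0.
Qed.

Lemma psmul1 f : psmul psone f = f.
Proof.
apply: functional_extensionality => c; rewrite psone_mono psmul_monol.
have -> : mle (@mzero d) c by apply/mleP=> j; rewrite ffunE.
by congr f; apply/ffunP=> j; rewrite !ffunE subn0.
Qed.

Lemma span_mono (R G G' : ps -> Prop) f :
  (forall g, G g -> G' g) -> Defs.span R G f -> Defs.span R G' f.
Proof.
move=> H [s [hs e]]; exists s; split => // p hp; case: (hs p hp) => *; split=> //; exact: H.
Qed.

Lemma pssum_single r g : pssum [seq psmul p.1 p.2 | p <- [:: (r, g)]] = psmul r g.
Proof.
by apply: functional_extensionality => c; rewrite /= /psadd /pszero addr0.
Qed.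

Lemma decomp (R : ps -> Prop) (n : nat) F (T : seq mon) :
  (forall r, (forall c, r c != 0 -> (n %| deg c)%N) -> R r) ->
  uniq T -> (forall t, t \in T -> (n %| deg t)%N) ->
  (forall c, F c != 0 -> (n %| deg c)%N) ->
  (forall c, F c != 0 -> has (fun t => mle t c) T) ->
  exists rs : seq ps, size rs = size T /\ (forall r, List.In r rs -> R r) /\
    F = pssum [seq psmul p.1 p.2 | p <- zip rs [seq mono t | t <- T]].
Proof.
move=> hR uT hT hF hfit.
pose sig c := nth (@mzero d) T (find (fun t => mle t c) T).
pose r t : ps := fun x => if sig (madd x t) == t then F (madd x t) else 0.
exists [seq r t | t <- T]; split; first by rewrite size_map.
split.
  move=> q /List.in_map_iff [t [<- ht]]; apply: hR => x; rewrite /r.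
  case: ifP => [_ hx|_]; last by rewrite eqxx.
  have := hF _ hx; rewrite deg_madd dvdn_addl //.
  by apply: hT; apply/In_memP.
apply: functional_extensionality => c.
rewrite pssum_coef zip_map big_map /=.
under eq_bigr => t _ do rewrite psmul_monor /r.
case: (eqVneq (F c) 0) => hc.
  by rewrite hc big1 // => t _; case: ifP => // ht; rewrite msubK //; case: ifP.
have hs := hfit c hc.
have sigT : sig c \in T by rewrite /sig mem_nth // -has_find.
have sigc : mle (sig c) c by rewrite /sig; apply: (nth_find (@mzero d) hs).
rewrite (bigID (pred1 (sig c))) /= [X in _ + X]big1 ?addr0; last first.
  move=> t /negbTE ht; case: ifP => // h; rewrite msubK //.
  by rewrite eq_sym ht.
rewrite -big_filter filter_pred1_uniq // big_seq1 sigc msubK // eqxx.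
by [].
Qed.
Lemma nat_min (P : nat -> Prop) : (exists n, P n) -> exists n, P n /\ forall m, P m -> (n <= m)%N.
Proof.
move=> [n0 hn0].
suff H : forall N n, (n <= N)%N -> P n -> exists n, P n /\ forall m, P m -> (n <= m)%N.
  exact: (H n0 n0).
elim=> [|N IH] n hnN hPn.
  exists n; split => // m _; by move: hnN; rewrite leqn0 => /eqP->.
case: (classic (exists m, (m < n)%N /\ P m)) => [[m [hm hPm]]|hno].
  by apply: (IH m) => //; rewrite -ltnS (leq_trans hm).
exists n; split => // m hPm; rewrite leqNgt; apply/negP => hmn; apply: hno; by exists m.
Qed.

Definition lexlt (a b : mon) := exists j : 'I_d, (forall l : 'I_d, (l < j)%N -> a l = b l) /\ (a j < b j)%N.

Lemma exists_lexmin (P : mon -> Prop) : (exists a, P a) ->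
  exists a, P a /\ forall b, P b -> a = b \/ lexlt a b.
Proof.
move=> [a0 ha0].
have H : forall K, (K <= d)%N -> exists a, P a /\ forall b, P b ->
   (forall l : 'I_d, (l < K)%N -> a l = b l) \/
   exists j : 'I_d, (j < K)%N /\ (forall l : 'I_d, (l < j)%N -> a l = b l) /\ (a j < b j)%N.
  elim=> [|K IH] hK.
    by exists a0; split => // b _; left.
  have [a [ha Ha]] := IH (ltnW hK).
  pose KK : 'I_d := Ordinal hK.
  have [m0 [[b0 [hb0 [hb0a hb0K]]] hmin]] :=
    @nat_min (fun m => exists b, P b /\ (forall l : 'I_d, (l < K)%N -> a l = b l) /\ b KK = m)
      (ex_intro _ (a KK) (ex_intro _ a (conj ha (conj (fun _ _ => erefl) erefl)))).
  exists b0; split => // b hb.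
  case: (Ha b hb) => [hab|[j [hjK [hj hlt]]]].
    have hm : (m0 <= b KK)%N by apply: hmin; exists b.
    rewrite leq_eqVlt in hm; case/orP: hm => [/eqP e|hlt].
      left => l; rewrite ltnS leq_eqVlt => /orP [/eqP e'|hl].
        have -> : l = KK by apply: val_inj.
        by rewrite hb0K e.
      by rewrite -hb0a // hab.
    right; exists KK; split => //; split; last by rewrite hb0K.
    by move=> l hl; rewrite -hb0a // hab.
  right; exists j; split; first by rewrite ltnS ltnW.
  split; last by rewrite -hb0a.
  by move=> l hl; rewrite -hb0a ?hj //; apply: ltn_trans hl hjK.
have [a [ha Ha]] := H d (leqnn d).
exists a; split => // b hb; case: (Ha b hb) => [e|[j [_ hj]]]; last by right; exists j.
by left; apply/ffunP=> l; apply: e.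
Qed.

Lemma lex_add a b a' b' : (a = a' \/ lexlt a a') -> (b = b' \/ lexlt b b') ->
  madd a b = madd a' b' -> a = a'.
Proof.
move=> [//|[j1 [h1 l1]]] hb e.
have ec : forall j, (a j + b j = a' j + b' j)%N.
  by move=> j; move/ffunP: e => /(_ j); rewrite !ffunE.
case: hb => [eb|[j2 [h2 l2]]].
  by apply/ffunP=> j; move: (ec j); rewrite eb => /addIn.
exfalso; case: (leqP j1 j2) => hj.
  have hb1 : (b j1 <= b' j1)%N.
    rewrite leq_eqVlt in hj; case/orP: hj => [/eqP hj|hj].
      have -> : j1 = j2 by apply: val_inj.
      exact: ltnW.
    by rewrite h2.
  by move: (ec j1); move=> E; have := leq_add l1 hb1; rewrite -E addSn ltnn.
have ha2 := h1 _ hj.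
by move: (ec j2); rewrite ha2 => /addnI E; move: l2; rewrite E ltnn.
Qed.

Lemma key (z : 'I_d) s f m : (exists a, s a != 0 /\ a z = 0%N) ->
  supp (fun c => m <= c z)%N (psmul s f) -> supp (fun c => m <= c z)%N f.
Proof.
move=> [a0 [hs0 hz0]] hsf; apply: NNPP => hnot.
have [cb [hcb hcbm]] : exists c, f c != 0 /\ ~ (m <= c z)%N.
  apply: NNPP => hn; apply: hnot => c hc; apply: NNPP => hm; apply: hn; by exists c.
have [j0 [[c0 [hc0 hc0z]] hmin]] :=
  @nat_min (fun v => exists c, f c != 0 /\ c z = v) (ex_intro _ (cb z) (ex_intro _ cb (conj hcb erefl))).
have hj0m : (j0 < m)%N.
  by rewrite ltnNge; apply/negP => h; apply: hcbm; apply: leq_trans h (hmin _ _); exists cb.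
have [a [[hsa haz] Ha]] := @exists_lexmin (fun a => s a != 0 /\ a z = 0%N) (ex_intro _ a0 (conj hs0 hz0)).
have [b [[hfb hbz] Hb]] := @exists_lexmin (fun c => f c != 0 /\ c z = j0) (ex_intro _ c0 (conj hc0 hc0z)).
have E : psmul s f (madd a b) = s a * f b.
  rewrite (psmul_single (b0 := a)); first by rewrite maddC maddK.
    by rewrite maddC mle_addl.
  move=> b' hb' hne; apply/eqP; apply: contraT; rewrite mulf_eq0 negb_or => /andP [h1 h2].
  set c' := msub (madd a b) b' in h2.
  have ec : madd b' c' = madd a b by rewrite maddC msubK.
  have hc'z : (j0 <= c' z)%N by apply: hmin; exists c'.
  have ez : (b' z + c' z = a z + b z)%N by move/ffunP: ec => /(_ z); rewrite !ffunE.
  rewrite haz hbz add0n in ez.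
  have hb'z : b' z = 0%N by lia.
  have hc'z2 : c' z = j0 by lia.
  have := lex_add (Ha b' (conj h1 hb'z)) (Hb c' (conj h2 hc'z2)) (esym ec).
  by move=> e; move: hne; rewrite e eqxx.
have := hsf (madd a b); rewrite E mulf_neq0 // ffunE haz hbz add0n => /(_ isT) h.
by move: hj0m; rewrite ltnNge h.
Qed.
Definition unitv (j : 'I_d) : mon := [ffun l => ((l == j) : nat)].
Definition mscale (m : nat) (a : mon) : mon := [ffun j => (m * a j)%N].

Lemma deg_unitv j : deg (unitv j) = 1%N.
Proof.
rewrite /deg (bigD1 j) //= big1 ?ffunE ?eqxx // => l hl.
by rewrite ffunE (negbTE hl).
Qed.

Lemma deg_mscale m a : deg (mscale m a) = (m * deg a)%N.
Proof. by rewrite /deg big_distrr; apply: eq_bigr => j _; rewrite ffunE. Qed.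

Lemma mle_unitv j c : mle (unitv j) c = (0 < c j)%N.
Proof.
apply/mleP/idP => [/(_ j)|h l]; first by rewrite ffunE eqxx.
by rewrite ffunE; case: eqP => [->|].
Qed.

Lemma submon (z : 'I_d) c m : (m <= deg c)%N ->
  exists b, [/\ mle b c, deg b = m & (minn (c z) m <= b z)%N].
Proof.
elim: m => [|m IH] hm.
  exists (@mzero d); split; last by rewrite minn0.
    by apply/mleP=> j; rewrite ffunE.
  by apply/eqP; rewrite deg_eq0.
have [b [hb hdb hbz]] := IH (ltnW hm).
have [j [hj hjz]] : exists j, (b j < c j)%N /\ ((b z < c z)%N -> j = z).
  case: (ltnP (b z) (c z)) => hz; first by exists z.
  apply: NNPP => hno.
  have : (deg c <= deg b)%N.
    rewrite /deg; apply: leq_sum => j _; rewrite leqNgt; apply/negP => hj.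
    by apply: hno; exists j; split => // h; move: hz; rewrite leqNgt h.
  by rewrite hdb leqNgt hm.
exists (madd b (unitv j)); split.
- apply/mleP => l; rewrite !ffunE; case: eqP => [->|_]; first by rewrite addn1.
  by rewrite addn0; move/mleP: hb.
- by rewrite deg_madd deg_unitv hdb addn1.
- rewrite !ffunE; case: (ltnP (b z) (c z)) => hz.
    rewrite (hjz hz) eqxx addn1; lia.
  lia.
Qed.

Lemma supp_mono (Q : pred mon) a : Q a -> supp Q (mono a).
Proof. move=> h c; rewrite /mono; case: (eqVneq c a) => [-> //|_]; by rewrite eqxx. Qed.

Lemma supp_R_mul (n : nat) f g : supp (fun c => n %| deg c)%N f ->
  supp (fun c => n %| deg c)%N g -> supp (fun c => n %| deg c)%N (psmul f g).
Proof.
apply: supp_mul => b c hbc h1; rewrite deg_msub // => h2.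
by rewrite -(subnKC (mle_deg hbc)) dvdn_add.
Qed.

Lemma supp_ord_mul (z : 'I_d) i j f g : supp (fun c => i <= c z)%N f ->
  supp (fun c => j <= c z)%N g -> supp (fun c => i + j <= c z)%N (psmul f g).
Proof.
apply: supp_mul => b c hbc h1; rewrite ffunE => h2.
have := mleP _ _ hbc z; lia.
Qed.

Lemma supp_weaken (Q Q' : pred mon) f : (forall c, Q c -> Q' c) -> supp Q f -> supp Q' f.
Proof. by move=> H h c hc; apply: H; apply: h. Qed.

Lemma supp_and (Q Q' : pred mon) f : supp Q f -> supp Q' f -> supp (fun c => Q c && Q' c) f.
Proof. by move=> h h' c hc; rewrite h ?h'. Qed.

Section Z.
Variables (z : 'I_d) (hz : nat_of_ord z = 0%N).

Lemma x1E : x1 = mono (unitv z).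
Proof.
have -> : unitv z = [ffun j : 'I_d => ((nat_of_ord j == 0%N) : nat)].
  apply/ffunP=> j; rewrite !ffunE; congr nat_of_bool.
  by rewrite -hz; apply/eqP/eqP => [->|e] //; apply: val_inj.
by [].
Qed.

Lemma supp_x1 g : supp (fun c => 1 <= c z)%N (psmul x1 g).
Proof.
by move=> c; rewrite x1E psmul_monol -mle_unitv; case: ifP => //; rewrite eqxx.
Qed.

Lemma x1_div s : supp (fun c => 1 <= c z)%N s ->
  s = psmul x1 (fun x => s (madd x (unitv z))).
Proof.
move=> h; apply: functional_extensionality => c; rewrite x1E psmul_monol.
case: ifP => hc; first by rewrite msubK.
apply/eqP; apply: contraT => hs; move: (h c hs); rewrite -mle_unitv hc.
by [].
Qed.
End Z.
Section Main.
Variables (n : nat) (z : 'I_d) (hz : nat_of_ord z = 0%N).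
Definition RR : ps -> Prop := veronese (k:=k) (d:=d) n.
Definition LL : ps -> Prop := fun f => RR f /\ exists g, f = psmul x1 g.

Lemma RR_supp f : RR f <-> supp (fun c => n %| deg c)%N f.
Proof. by []. Qed.

Lemma LL_supp1 f : LL f -> supp (fun c => 1 <= c z)%N f.
Proof. by move=> [_ [g ->]]; apply: supp_x1. Qed.

Lemma prodset_supp (t : nat) j f : (forall g, LL g -> supp (fun c => t <= c z)%N g) ->
  prodset LL j f -> supp (fun c => t * j <= c z)%N f.
Proof.
move=> H; elim: j f => [|j IH] f /=.
  by move=> -> c _; rewrite muln0.
move=> [g [h [hg [hh ->]]]]; rewrite mulnS addnC.
exact: supp_ord_mul (IH _ hg) (H _ hh).
Qed.

Lemma idealpow_supp (t : nat) j f : (forall g, LL g -> supp (fun c => t <= c z)%N g) ->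
  idealpow RR LL j f -> supp (fun c => t * j <= c z)%N f.
Proof.
move=> H; apply: span_supp => r g _ hg.
have := supp_ord_mul (i:=0) (fun c _ => leq0n (c z)) (prodset_supp H hg).
by [].
Qed.

Lemma notLL_ex s : RR s -> ~ LL s -> exists a, s a != 0 /\ a z = 0%N.
Proof.
move=> hR hL; apply: NNPP => hno; apply: hL; split => //.
exists (fun x => s (madd x (unitv z))); apply: x1_div => // c hc.
rewrite lt0n; apply/negP => /eqP e; apply: hno; by exists c.
Qed.

Lemma sympow_supp (t : nat) j f : (forall g, LL g -> supp (fun c => t <= c z)%N g) ->
  sympow RR LL j f -> RR f /\ supp (fun c => t * j <= c z)%N f.
Proof.
move=> H [hf [s [hs [hns hp]]]]; split => //.
apply: (key (s:=s)); first exact: notLL_ex.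
exact: idealpow_supp hp.
Qed.

Lemma In_zip (A B : Type) (s : seq A) (t : seq B) p :
  List.In p (zip s t) -> List.In p.1 s /\ List.In p.2 t.
Proof.
elim: s t => [|x s IH] [|y t] //= [<-|h]; try by auto.
by case: (IH _ h) => *; auto.
Qed.


Section Big.
Variables (o : 'I_d) (hoz : o != z) (i : nat) (hi1 : (1 <= i)%N) (hin : (i <= n - 1)%N).

Definition q : mon := madd (unitv z) (mscale (n - 1) (unitv o)).
Definition Qi : mon := mscale (i - 1) q.
Definition w : mon := mscale (n * (i - 1)) (unitv o).

Lemma hzo : (z == o) = false.
Proof. by rewrite eq_sym (negbTE hoz). Qed.

Lemma deg_q : deg q = n.
Proof. rewrite deg_madd deg_mscale !deg_unitv; lia. Qed.

Lemma q_z : q z = 1%N.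
Proof. by rewrite !ffunE eqxx hzo muln0. Qed.

Lemma LL_mono b : deg b = n -> (0 < b z)%N -> LL (mono b).
Proof.
move=> hd hb; split; first by apply: supp_mono; rewrite /= hd.
exists (fun x => mono b (madd x (unitv z))); apply: x1_div => //.
by apply: supp_mono.
Qed.

Lemma prod_mono b j : deg b = n -> (0 < b z)%N -> prodset LL j.+1 (mono (madd b (mscale j q))).
Proof.
move=> hd hb; elim: j => [|j IH].
  exists psone, (mono b); split => //; split; first exact: LL_mono.
  by rewrite psmul1; congr mono; apply/ffunP=> l; rewrite !ffunE mul0n addn0.
exists (mono (madd b (mscale j q))), (mono q); split => //; split.
  by apply: LL_mono; rewrite ?deg_q ?q_z.
rewrite mono_mul; congr mono; apply/ffunP=> l; rewrite !ffunE.
by move: (nat_of_bool _) (nat_of_bool _) => u v; lia.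
Qed.

Lemma mle_madd_sub a b c : mle b (msub c a) -> mle a c -> mle (madd b a) c.
Proof.
move=> /mleP h1 /mleP h2; apply/mleP=> l; move: (h1 l) (h2 l); rewrite !ffunE; lia.
Qed.

Lemma dvd_pos_le (m : nat) : (n %| m)%N -> (0 < m)%N -> (n <= m)%N.
Proof. by move=> h1 h2; apply: dvdn_leq. Qed.

Definition T1 := [seq madd b Qi | b <- [seq b : mon <- @monlist d n | (0 < b z)%N]].

Lemma M_sympow f : RR f -> supp (fun c => i <= c z)%N f -> sympow RR LL i f.
Proof.
move=> hR hf; split => //.
exists (mono w); split; first by apply: supp_mono; rewrite /= deg_mscale deg_unitv muln1 dvdn_mulr.
split.
  move=> hL; have := LL_supp1 hL (c := w); rewrite /mono eqxx oner_neq0 ffunE => /(_ isT).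
  by rewrite ffunE hzo muln0.
have hmR : supp (fun c => n %| deg c)%N (psmul (mono w) f).
  by apply: supp_R_mul => //; apply: supp_mono; rewrite /= deg_mscale deg_unitv muln1 dvdn_mulr.
have u1 : uniq T1.
  rewrite map_inj_uniq; first by rewrite filter_uniq // uniq_monlist.
  by move=> a b e; rewrite -(maddK a Qi) e maddK.
have u2 : forall t, t \in T1 -> (n %| deg t)%N.
  move=> t /mapP [b]; rewrite mem_filter mem_monlist => /andP [_ /eqP hdb] ->.
  rewrite deg_madd hdb deg_mscale deg_q; apply: dvdn_add; [exact: dvdnn | exact: dvdn_mull].
have u3 : forall c, psmul (mono w) f c != 0 -> has (fun t => mle t c) T1.
  move=> c; rewrite psmul_monol; case: ifP => hwc; last by rewrite eqxx.
  move=> hfc; have hcz := hf _ hfc; have hcd : (n %| deg (msub c w))%N by apply: hR.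
  have ec : madd (msub c w) w = c by rewrite msubK.
  have hQc : mle Qi c.
    apply/mleP=> l; have hw := mleP _ _ hwc l; move: hcz hw; rewrite !ffunE.
    case: (eqVneq l z) => [->|hlz]; first by rewrite hzo /=; lia.
    case: (eqVneq l o) => [->|hlo]; first by rewrite hzo /=; nia.
    by rewrite ?hzo ?(negbTE hlz) ?(negbTE hlo) /=; lia.
  have hdc' : (n <= deg (msub c Qi))%N.
    rewrite deg_msub // -ec deg_madd !deg_mscale deg_q deg_unitv.
    have : (n <= deg (msub c w))%N.
      apply: dvd_pos_le => //; apply: leq_trans _ (coord_le_deg _ z); lia.
    lia.
  have [b [hb hdb hbz]] := submon z hdc'.
  apply/hasP; exists (madd b Qi).
    apply/mapP; exists b => //; rewrite mem_filter mem_monlist hdb eqxx andbT.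
    move: hbz hcz; rewrite !ffunE ?eqxx ?hzo /=; lia.
  exact: mle_madd_sub.
have [rs [hsz [hrs ->]]] := @decomp RR n (psmul (mono w) f) T1 (fun (r : ps) (h : supp (fun c => n %| deg c)%N r) => (h : RR r)) u1 u2 hmR u3.
exists (zip rs [seq mono t | t <- T1]); split => // p /In_zip [h1 h2]; split; first exact: hrs.
  move: h2 => /List.in_map_iff [t [<- /In_memP]] /mapP [b].
  rewrite mem_filter mem_monlist => /andP [hbz /eqP hdb] ->.
  have -> : i = (i - 1).+1 by lia.
  exact: prod_mono.
Qed.


Definition Ni : seq mon := [seq madd a (mscale i (unitv z)) | a <- @monlist d (n - i)].
Definition G : seq ps := [seq mono t | t <- Ni].

Lemma mle_iz c : mle (mscale i (unitv z)) c = (i <= c z)%N.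
Proof.
apply/mleP/idP => [/(_ z)|h l]; first by rewrite !ffunE eqxx muln1.
by rewrite !ffunE; case: (eqVneq l z) => [->|_]; rewrite ?muln1 ?muln0.
Qed.

Lemma mem_Ni c : (c \in Ni) = (deg c == n) && (i <= c z)%N.
Proof.
apply/mapP/andP => [[a]|[/eqP hd hi]].
  rewrite mem_monlist => /eqP ha ->; split.
    by rewrite deg_madd deg_mscale deg_unitv ha; apply/eqP; lia.
  by rewrite !ffunE eqxx; lia.
exists (msub c (mscale i (unitv z))); last by rewrite msubK // mle_iz.
rewrite mem_monlist deg_msub ?mle_iz // deg_mscale deg_unitv hd muln1.
by [].
Qed.

Lemma uniq_Ni : uniq Ni.
Proof.
rewrite map_inj_uniq ?uniq_monlist //.
by move=> a b e; rewrite -(maddK a (mscale i (unitv z))) e maddK.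
Qed.

Lemma size_Ni : size Ni = 'C(n - i + d - 1, d - 1).
Proof.
have hd : (0 < d)%N by apply: leq_ltn_trans (leq0n z) (ltn_ord z).
rewrite size_map size_monlist -bin_sub; last by lia.
by congr binomial; lia.
Qed.

Lemma sympow_M f : sympow RR LL i f -> RR f /\ supp (fun c => i <= c z)%N f.
Proof.
move=> h; have [] := sympow_supp (t := 1) (fun g hg => LL_supp1 hg) h.
by rewrite mul1n.
Qed.

Lemma span_M f : Defs.span RR (fun g => List.In g G) f -> RR f /\ supp (fun c => i <= c z)%N f.
Proof.
move=> h.
suff H : supp (fun c => (n %| deg c)%N && (i <= c z)%N) f.
  by split => c hc; case/andP: (H _ hc).
apply: (span_supp _ h) => r g hr /List.in_map_iff [t [<- /In_memP]]; rewrite mem_Ni => /andP [/eqP ht hti].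
apply: supp_and; first by apply: supp_R_mul => //; apply: supp_mono; rewrite /= ht.
have := supp_ord_mul (i := 0) (j := i) (f := r) (fun c _ => leq0n (c z)) (@supp_mono (fun c => i <= c z)%N t hti).
by [].
Qed.

Lemma M_span f : RR f -> supp (fun c => i <= c z)%N f -> Defs.span RR (fun g => List.In g G) f.
Proof.
move=> hR hf.
have u2 : forall t, t \in Ni -> (n %| deg t)%N.
  by move=> t; rewrite mem_Ni => /andP [/eqP -> _].
have u3 : forall c, f c != 0 -> has (fun t => mle t c) Ni.
  move=> c hc; have hcz := hf _ hc; have hcd : (n %| deg c)%N by apply: hR.
  have hnc : (n <= deg c)%N.
    apply: dvd_pos_le => //; apply: leq_trans _ (coord_le_deg _ z); lia.
  have [b [hb hdb hbz]] := submon z hnc.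
  apply/hasP; exists b => //; rewrite mem_Ni hdb eqxx /=; lia.
have [rs [hsz [hrs ->]]] := @decomp RR n f Ni (fun (r : ps) (h : supp (fun c => n %| deg c)%N r) => (h : RR r)) uniq_Ni u2 hR u3.
exists (zip rs G); split => // p /In_zip [h1 h2]; split; [exact: hrs | exact: h2].
Qed.

Lemma gen_G : generated_by RR (sympow RR LL i) G.
Proof.
move=> f; split => [/sympow_M [h1 h2]|/span_M [h1 h2]]; first exact: M_span.
exact: M_sympow.
Qed.

Lemma G_sympow g : List.In g G -> sympow RR LL i g.
Proof.
move=> /List.in_map_iff [t [<- /In_memP]]; rewrite mem_Ni => /andP [/eqP ht hti].
apply: M_sympow; [by apply: supp_mono; rewrite /= ht | exact: supp_mono].
Qed.

Definition phi (f : ps) : 'rV[k]_(size Ni) := \row_(j < size Ni) f (nth (@mzero d) Ni j).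

Lemma phi_mul r g : RR r -> supp (fun c => i <= c z)%N g -> phi (psmul r g) = r (@mzero d) *: phi g.
Proof.
move=> hr hg; apply/rowP => j; rewrite !mxE.
have : nth (@mzero d) Ni j \in Ni by rewrite mem_nth.
move: (nth _ _ _) => a; rewrite mem_Ni => /andP [/eqP ha hai].
have e0 : msub a (@mzero d) = a by apply/ffunP=> l; rewrite !ffunE subn0.
rewrite (psmul_single (b0 := @mzero d)); first by rewrite e0.
  by apply/mleP=> l; rewrite ffunE.
move=> b hb hne; apply/eqP; rewrite mulf_eq0; case: (eqVneq (r b) 0) => //= hrb.
have hdb := hr _ hrb; have hb0 : (0 < deg b)%N by rewrite lt0n deg_eq0.
have hdb' : deg b = n by have := mle_deg hb; have := dvd_pos_le hdb hb0; lia.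
have hm : msub a b = @mzero d by apply/eqP; rewrite -deg_eq0 deg_msub // ha hdb' subnn.
rewrite hm; apply: contraT => hg0; have := hg _ hg0; rewrite ffunE; lia.
Qed.

Lemma phi_add f g : phi (psadd f g) = phi f + phi g.
Proof. by apply/rowP => j; rewrite !mxE. Qed.

Lemma phi_zero : phi pszero = 0.
Proof. by apply/rowP => j; rewrite !mxE. Qed.

Lemma phi_span (s : seq ps) (l : seq (ps * ps)) :
  (forall g, List.In g s -> supp (fun c => i <= c z)%N g) ->
  (forall p, List.In p l -> RR p.1 /\ List.In p.2 s) ->
  phi (pssum [seq psmul p.1 p.2 | p <- l]) \in <<[seq phi g | g <- s]>>%VS.
Proof.
move=> hs; elim: l => [|p l IH] hl /=; first by rewrite phi_zero mem0v.
rewrite phi_add; apply: memvD; last by apply: IH => q hq; apply: hl; right.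
have [h1 h2] := hl p (or_introl erefl).
rewrite phi_mul //; last exact: hs.
apply: memvZ; apply: memv_span; apply/In_memP; exact: List.in_map.
Qed.

Definition Fv (v : 'rV[k]_(size Ni)) : ps :=
  fun c => \sum_(j < size Ni) (if c == nth (@mzero d) Ni j then v 0 j else 0).

Lemma Fv_supp v c : Fv v c != 0 -> c \in Ni.
Proof.
move=> h; apply: contraT => hc; move: h; rewrite /Fv big1 ?eqxx // => j _.
case: eqP => // e; move: hc; rewrite e mem_nth //.
Qed.

Lemma phi_Fv v : phi (Fv v) = v.
Proof.
apply/rowP => j; rewrite mxE /Fv (bigD1 j) //= eqxx big1 ?addr0 //.
move=> l hl; rewrite nth_uniq ?uniq_Ni //; case: eqP => // e.
by move: hl; rewrite -(inj_eq val_inj) /= ?e ?eqxx.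
Qed.

Lemma lower (s : seq ps) : (forall g, List.In g s -> sympow RR LL i g) ->
  generated_by RR (sympow RR LL i) s -> (size Ni <= size s)%N.
Proof.
move=> hs hgen.
have hs' : forall g, List.In g s -> supp (fun c => i <= c z)%N g.
  by move=> g hg; case: (sympow_M (hs g hg)).
have sub : (fullv <= <<[seq phi g | g <- s]>>)%VS.
  apply/subvP => v _; rewrite -(phi_Fv v).
  have hF : sympow RR LL i (Fv v).
    apply: M_sympow => c hc; have := Fv_supp hc; rewrite mem_Ni => /andP [/eqP hd hi] //.
    by rewrite hd dvdnn.
  have [l [hl ->]] := (hgen (Fv v)).1 hF.
  exact: phi_span.
have := dimvS sub; rewrite dimvf dim_matrix mul1r => h.
by apply: leq_trans h _; rewrite (leq_trans (dim_span _)) ?size_map.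
Qed.
End Big.
Section One.
Variables (hall : forall j : 'I_d, j = z) (i : nat) (hn : (1 < n)%N).

Lemma deg_z c : deg c = c z.
Proof.
rewrite /deg (bigD1 z) //= big1 ?addn0 // => j hj.
by move: hj; rewrite (hall j) eqxx.
Qed.

Lemma deg_mzero : deg (@mzero d) = 0%N.
Proof. by apply/eqP; rewrite deg_eq0. Qed.

Definition N1 : mon := mscale (n * i) (unitv z).
Definition G1 : seq ps := [seq mono t | t <- [:: N1]].

Lemma LL_suppn g : LL g -> supp (fun c => n <= c z)%N g.
Proof.
move=> hg c hc; have h1 := LL_supp1 hg hc; have h2 := hg.1 _ hc.
by rewrite deg_z in h2; apply: dvdn_leq.
Qed.

Lemma prod1 j : prodset LL j (mono (mscale (n * j) (unitv z))).
Proof.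
elim: j => [|j IH] /=.
  rewrite psone_mono; congr mono; apply/ffunP=> l; rewrite !ffunE muln0 mul0n //.
exists (mono (mscale (n * j) (unitv z))), (mono (mscale n (unitv z))); split => //; split.
  split; first by apply: supp_mono; rewrite /= deg_mscale deg_unitv muln1 dvdnn.
  exists (fun x => mono (mscale n (unitv z)) (madd x (unitv z))); apply: x1_div => //.
  apply: supp_mono; rewrite /= !ffunE eqxx muln1; lia.
rewrite mono_mul; congr mono; apply/ffunP => l; rewrite !ffunE mulnS mulnDl addnC.
by [].
Qed.

Lemma span_sympow1 f : Defs.span RR (fun g => List.In g G1) f -> sympow RR LL i f.
Proof.
move=> h; split.
  apply: (span_supp _ h) => r g hr [<-|[]]; apply: supp_R_mul => //.
  by apply: supp_mono; rewrite /= deg_mscale deg_unitv muln1 dvdn_mulr.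
exists psone; split.
  by rewrite psone_mono; apply: supp_mono; rewrite /= deg_mzero dvdn0.
split.
  move=> hL; have := LL_supp1 hL (c := @mzero d).
  by rewrite psone_mono /mono eqxx oner_neq0 ffunE => /(_ isT).
rewrite psmul1; apply: span_mono h => g [<-|[]]; exact: prod1.
Qed.

Lemma sympow_span1 f : sympow RR LL i f -> Defs.span RR (fun g => List.In g G1) f.
Proof.
move=> h; have [hR hf] := sympow_supp LL_suppn h.
have u2 : forall t, t \in [:: N1] -> (n %| deg t)%N.
  by move=> t; rewrite inE => /eqP ->; rewrite deg_mscale deg_unitv muln1 dvdn_mulr.
have u3 : forall c, f c != 0 -> has (fun t => mle t c) [:: N1].
  move=> c hc; rewrite /= orbF; apply/mleP => l; rewrite (hall l) !ffunE ?eqxx ?muln1.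
  exact: hf.
have [rs [hsz [hrs ->]]] := @decomp RR n f [:: N1] (fun (r : ps) (h : supp (fun c => n %| deg c)%N r) => (h : RR r)) isT u2 hR u3.
exists (zip rs G1); split => // p /In_zip [h1 h2]; split; [exact: hrs | exact: h2].
Qed.

Lemma gen_G1 : generated_by RR (sympow RR LL i) G1.
Proof. by move=> f; split; [apply: sympow_span1 | apply: span_sympow1]. Qed.

Lemma G1_sympow g : List.In g G1 -> sympow RR LL i g.
Proof.
move=> hg; apply: span_sympow1; exists [:: (psone, g)]; split.
  move=> p [<-|[]]; split => //.
  by rewrite psone_mono; apply: supp_mono; rewrite /= deg_mzero dvdn0.
by rewrite pssum_single psmul1.
Qed.

Lemma lower1 (s : seq ps) : generated_by RR (sympow RR LL i) s -> (1 <= size s)%N.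
Proof.
case: s => // hgen.
have hN : sympow RR LL i (mono N1).
  apply: span_sympow1; exists [:: (psone, mono N1)]; split.
    move=> p [<-|[]]; split; last by left.
    by rewrite psone_mono; apply: supp_mono; rewrite /= deg_mzero dvdn0.
  by rewrite pssum_single psmul1.
have [l [hl e]] := (hgen _).1 hN.
have el : l = [::] by case: l hl e => // p l hl; case: (hl p (or_introl erefl)) => _ [].
move: e; rewrite el /= => e.
have := congr1 (fun F => F N1) e; rewrite /mono eqxx /pszero => /eqP.
by rewrite oner_eq0.
Qed.

End One.
End Main.
End PSL.

Theorem lemma3p18 (k : fieldType) (d n : nat) (hd : (0 < d)%N) (hn : (1 < n)%N) :
  let R := veronese (k := k) (d := d) n in
  let L := fun f : ps k d => R f /\ exists g : ps k d, f = psmul (@x1 k d) g in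
  forall i : nat, (1 <= i <= n - 1)%N ->
    min_num_gens R (sympow R L i) 'C(n - i + d - 1, d - 1).
Proof.
move=> R L; rewrite {}/L {}/R => i /andP [hi1 hin].
case: d hd => [//|d'] _.
have hz : nat_of_ord (@ord0 d') = 0%N by [].
case: d' hz => [|d'] hz.
  have hall : forall j : 'I_1, j = ord0 by move=> j; rewrite (ord1 j).
  have -> : 'C(n - i + 1 - 1, 1 - 1) = 1%N by rewrite subnn bin0.
  split.
    exists (G1 k n ord0 i); split => //; split.
      by move=> g hg; apply: (G1_sympow hz hn).
    exact: (gen_G1 hz hall i hn).
  by move=> s _ hgen; apply: (lower1 hz (i := i) hn).
have hoz : (Ordinal (isT : (1 < d'.+2)%N)) != (@ord0 d'.+1) by [].
split.
  exists (G k n ord0 i); split; first by rewrite size_map (size_Ni hz hoz hi1 hin).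
  split; first by move=> g hg; apply: (G_sympow hz hoz hi1 hin).
  exact: (gen_G hz hoz hi1 hin).
move=> s hs hgen; rewrite -(size_Ni hz hoz hi1 hin).
exact: (lower hz hoz hi1 hin hs hgen).
Qed.
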